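(* Let $A \in \mathbb{Z}_+^{n\times m}$ and $B \in \mathbb{Z}_+^{k \times m}$ be nonnegative integer matrices, both of rank $r$. Suppose that: (i) $A$ and $B$ have the same row space; (ii) for every $x \in \mathbb{R}^m$, $Ax \in \mathbb{Z}^n$ if and only if $Bx \in \mathbb{Z}^k$; (iii) for every $x \in \mathbb{R}^m$, $Ax \geq 0$ (entrywise) if and only if $Bx \geq 0$ (entrywise). Then either $\operatorname{rank}_{\mathbb{Z}_+}(A)=\operatorname{rank}_{\mathbb{Z}_+}(B)=r$, or both $\operatorname{rank}_{\mathbb{Z}_+}(A) > r$ and $\operatorname{rank}_{\mathbb{Z}_+}(B) > r$.
   Context: For a matrix $A \in \mathbb{Z}_+^{n\times m}$, its nonnegative integer rank $\operatorname{rank}_{\mathbb{Z}_+}(A)$ is the smallest integer $k$ such that there exist matrices $B \in \mathbb{Z}_+^{n\times k}$ and $C \in \mathbb{Z}_+^{k\times m}$ with $A = BC$, where $\mathbb{Z}_+$ denotes the nonnegative integers. *)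

(* Defs.v *)
From mathcomp Require Import all_boot all_order all_algebra.
From mathcomp Require Import Rstruct.
Set Implicit Arguments. Unset Strict Implicit. Unset Printing Implicit Defensive.
Import Order.TTheory GRing.Theory Num.Theory.
Local Open Scope ring_scope.

Definition zplus_factorizable (n m k : nat) (A : 'M[nat]_(n, m)) : Prop :=
  exists (B : 'M[nat]_(n, k)) (C : 'M[nat]_(k, m)), A = B *m C.

Definition zplus_rank_is (n m : nat) (A : 'M[nat]_(n, m)) (k : nat) : Prop :=
  zplus_factorizable k A /\ forall k', zplus_factorizable k' A -> (k <= k')%N.

Definition natRmx (n m : nat) (A : 'M[nat]_(n, m)) : 'M[Rdefinitions.R]_(n, m) :=
  map_mx (fun a : nat => a%:R) A.

(* Main.v *)
Require Import Defs.
From mathcomp Require Import all_boot all_order all_algebra.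
From mathcomp Require Import Rstruct.
From Stdlib Require Import Classical.
Import Order.TTheory GRing.Theory Num.Theory.
Local Open Scope ring_scope.

Lemma natRmxM (n p q : nat) (X : 'M[nat]_(n,p)) (Y : 'M[nat]_(p,q)) :
  natRmx (X *m Y) = natRmx X *m natRmx Y.
Proof.
apply/matrixP=> i j; rewrite !mxE natr_sum; apply: eq_bigr => l _.
by rewrite !mxE natrM.
Qed.

Lemma natRmx_inj (n p : nat) (X Y : 'M[nat]_(n,p)) :
  natRmx X = natRmx Y -> X = Y.
Proof.
move=> H; apply/matrixP=> i j; move/matrixP/(_ i j): H; rewrite !mxE.
by move/eqP; rewrite eqr_nat => /eqP.
Qed.

Lemma rank_le (n m k : nat) (A : 'M[nat]_(n,m)) :
  zplus_factorizable k A -> (\rank (natRmx A) <= k)%N.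
Proof.
move=> [U [V ->]]; rewrite natRmxM.
exact: leq_trans (mxrankM_maxl _ _) (rank_leq_col _).
Qed.

Lemma exists_min (P : nat -> Prop) (n : nat) :
  P n -> exists k, P k /\ forall k', P k' -> (k <= k')%N.
Proof.
elim: n {-2}n (leqnn n) => [|n IH] m Hm Pm.
  exists m; split => // k' _; by move: Hm; rewrite leqn0 => /eqP ->.
destruct (classic (exists j, P j /\ (j < m)%N)) as [[j [Pj Hj]]|Hno].
  apply: (IH j) => //; rewrite -ltnS; exact: leq_trans Hj Hm.
exists m; split => // k' Pk'; rewrite leqNgt; apply/negP => Hk.
by apply: Hno; exists k'.
Qed.

Lemma fact_self (n m : nat) (A : 'M[nat]_(n,m)) : zplus_factorizable n A.
Proof. exists 1%:M, A; by rewrite mul1mx. Qed.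

Lemma transfer (n m k r : nat) (A : 'M[nat]_(n, m)) (B : 'M[nat]_(k, m)) :
  \rank (natRmx A) = r ->
  (natRmx B <= natRmx A)%MS ->
  (forall x : 'cV[Rdefinitions.R]_m,
      (forall i, (natRmx A *m x) i 0 \is a Num.int) ->
      (forall j, (natRmx B *m x) j 0 \is a Num.int)) ->
  (forall x : 'cV[Rdefinitions.R]_m,
      (forall i, 0 <= (natRmx A *m x) i 0) ->
      (forall j, 0 <= (natRmx B *m x) j 0)) ->
  zplus_factorizable r A -> zplus_factorizable r B.
Proof.
move=> rA sBA hI hP [U [V eA]].
have ea : natRmx A = natRmx U *m natRmx V by rewrite eA natRmxM.
have fV : row_free (natRmx V).
  rewrite /row_free eqn_leq rank_leq_row /= -{1}rA ea.
  exact: mxrankM_maxr.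
have [P vP] := row_freeP fV.
have sB : (natRmx B <= natRmx V)%MS.
  apply: submx_trans sBA _; rewrite ea; exact: submxMl.
set w := natRmx B *m pinvmx (natRmx V).
have eB : w *m natRmx V = natRmx B := mulmxKpV sB.
have aP : natRmx A *m P = natRmx U by rewrite ea -mulmxA vP mulmx1.
have bP : natRmx B *m P = w by rewrite -eB -mulmxA vP mulmx1.
have colE (p : nat) (M : 'M[Rdefinitions.R]_(p, m)) i j :
    (M *m col j P) i 0 = (M *m P) i j.
  by rewrite !mxE; apply: eq_bigr => l _; rewrite !mxE.
have key i j : w i j \is a Num.nat.
  rewrite natrEint; apply/andP; split.
    have H : forall i', (natRmx A *m col j P) i' 0 \is a Num.int.
      by move=> i'; rewrite colE aP mxE natr_int.
    by have := hI (col j P) H i; rewrite colE bP.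
  have H : forall i', 0 <= (natRmx A *m col j P) i' 0.
    by move=> i'; rewrite colE aP mxE ler0n.
  by have := hP (col j P) H i; rewrite colE bP.
exists (\matrix_(i, j) Num.truncn (w i j)), V.
apply: natRmx_inj; rewrite natRmxM -eB; congr (_ *m _).
apply/matrixP => i j; by have := truncnK (key i j); rewrite !mxE => ->.
Qed.

Theorem mainTheorem3 (n m k r : nat) (A : 'M[nat]_(n, m)) (B : 'M[nat]_(k, m)) :
  \rank (natRmx A) = r ->
  \rank (natRmx B) = r ->
  (natRmx A == natRmx B)%MS ->
  (forall x : 'cV[Rdefinitions.R]_m,
      (forall i, (natRmx A *m x) i 0 \is a Num.int) <->
      (forall j, (natRmx B *m x) j 0 \is a Num.int)) ->
  (forall x : 'cV[Rdefinitions.R]_m,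
      (forall i, 0 <= (natRmx A *m x) i 0) <->
      (forall j, 0 <= (natRmx B *m x) j 0)) ->
  (zplus_rank_is A r /\ zplus_rank_is B r) \/
  (exists rA rB, zplus_rank_is A rA /\ zplus_rank_is B rB /\ (r < rA)%N /\ (r < rB)%N).
Proof.
move=> rA rB /andP[sAB sBA] hI hP.
have AB : zplus_factorizable r A -> zplus_factorizable r B.
  apply: (@transfer n m k r A B rA sBA).
    by move=> x; exact: (proj1 (hI x)).
  by move=> x; exact: (proj1 (hP x)).
have BA : zplus_factorizable r B -> zplus_factorizable r A.
  apply: (@transfer k m n r B A rB sAB).
    by move=> x; exact: (proj2 (hI x)).
  by move=> x; exact: (proj2 (hP x)).
have [a [Fa Ma]] := @exists_min (fun j => zplus_factorizable j A) _ (@fact_self _ _ A).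
have [b [Fb Mb]] := @exists_min (fun j => zplus_factorizable j B) _ (@fact_self _ _ B).
have ra : (r <= a)%N by rewrite -rA; exact: rank_le Fa.
have rb : (r <= b)%N by rewrite -rB; exact: rank_le Fb.
case: (ltnP r a) => [ha|ha].
  case: (ltnP r b) => [hb|hb].
    by right; exists a, b.
  have eb : b = r by apply/eqP; rewrite eqn_leq hb rb.
  subst b; have := Ma r (BA Fb); by rewrite leqNgt ha.
have ea : a = r by apply/eqP; rewrite eqn_leq ha ra.
subst a; left; split; split => //; first exact: AB Fa.
have hb : (b <= r)%N by exact: Mb _ (AB Fa).
move=> k' Fk'; apply: leq_trans (Mb k' Fk').
exact: rb.
Qed.
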